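(* Let $A$ be a semiprime $2$-torsion free associative algebra and $Q$ a subalgebra of $Q_s(A)$ containing $A$. Let $q\in Q$ and suppose there is an essential ideal $I$ of $A$ with $qI+Iq\subseteq A$ and $[q,[I,I]]=0$. Then $[q,I]=0$.
   Context: Algebras are over a commutative unital ring $\Phi$. $[x,y]=xy-yx$ and $[X,Y]$ is the span of $[x,y]$, $x\in X,y\in Y$. $A$ is $2$-torsion free if $2x=0\Rightarrow x=0$. An ideal is essential if it has nonzero intersection with every nonzero ideal. $Q_s(A)$ is the Martindale symmetric algebra of quotients of the semiprime algebra $A$: the elements $q$ of the maximal left quotient algebra $Q^l_{\max}(A)$ for which some essential ideal $I$ of $A$ satisfies $Iq+qI\subseteq A$. *)

(* Defs.v *)
From HB Require Import structures.
From mathcomp Require Import all_boot all_order all_algebra.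
Set Implicit Arguments. Unset Strict Implicit. Unset Printing Implicit Defensive.
Import GRing.Theory.
Local Open Scope ring_scope.

(* Conventions: Phi is the commutative unital base ring; S is a (unital)
   Phi-algebra playing the role of the Martindale symmetric algebra of
   quotients Q_s(A).  The (possibly non-unital) algebra A and the
   subalgebra Q are subsets of S given as Prop-valued predicates. *)

Section Defs.
Variables (Phi : comPzRingType) (S : algType Phi).

Definition commutator (x y : S) : S := x * y - y * x.

Definition is_subalgebra (P : S -> Prop) : Prop :=
  [/\ P 0,
      (forall x y, P x -> P y -> P (x - y)),
      (forall x y, P x -> P y -> P (x * y)) &
      (forall (a : Phi) x, P x -> P (a *: x))].

Definition is_ideal (A I : S -> Prop) : Prop :=
  [/\ (forall x, I x -> A x),
      I 0,
      (forall x y, I x -> I y -> I (x - y)),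
      (forall (a : Phi) x, I x -> I (a *: x)) &
      (forall a x, A a -> I x -> I (a * x) /\ I (x * a))].

Definition essential_ideal (A I : S -> Prop) : Prop :=
  is_ideal A I /\
  forall J, is_ideal A J -> (exists x, J x /\ x <> 0) ->
    exists x, I x /\ J x /\ x <> 0.

Definition semiprime (A : S -> Prop) : Prop :=
  forall J, is_ideal A J -> (forall x y, J x -> J y -> x * y = 0) ->
    forall x, J x -> x = 0.

Definition two_torsion_free (A : S -> Prop) : Prop :=
  forall x, A x -> x *+ 2 = 0 -> x = 0.

(* Abstract characterization of (a ring isomorphic to a subring of) the
   Martindale symmetric algebra of quotients Q_s(A) containing A:
   every q has an essential ideal I of A with Iq + qI contained in A, and
   no nonzero q is annihilated (on either side) by an essential ideal. *)
Definition symmetric_quotient_algebra (A : S -> Prop) : Prop :=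
  [/\ (forall q : S, exists I, essential_ideal A I /\
          forall x, I x -> A (x * q) /\ A (q * x)),
      (forall (q : S) I, essential_ideal A I ->
          (forall x, I x -> q * x = 0) -> q = 0) &
      (forall (q : S) I, essential_ideal A I ->
          (forall x, I x -> x * q = 0) -> q = 0)].

End Defs.

(* Main.v *)
Require Import Defs.
From HB Require Import structures.
From mathcomp Require Import all_boot all_order all_algebra.
Import GRing.Theory.
Local Open Scope ring_scope.

Lemma semiprime_elt (Phi : comPzRingType) (S : algType Phi) (A : S -> Prop)
  (hA : is_subalgebra A) (hsemi : semiprime A) (u : S) :
  A u -> (forall a, A a -> u * a * u = 0) -> u * u = 0 -> u = 0.
Proof.
case: hA => A0 AB AM AZ => Au uau uu.
pose L := fun x => A x /\ x * u = 0 /\ forall a, A a -> x * a * u = 0.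
pose M := fun y => A y /\ forall x, L x -> x * y = 0 /\ forall a, A a -> x * a * y = 0.
have LmulR : forall x b, L x -> A b -> L (x * b).
  move=> x b [Ax [xu xau]] Ab; split; first exact: AM.
  split; first by rewrite xau.
  by move=> a Aa; rewrite -(mulrA x b a) xau //; apply: AM.
have LmulL : forall x b, L x -> A b -> L (b * x).
  move=> x b [Ax [xu xau]] Ab; split; first exact: AM.
  split; first by rewrite -mulrA xu mulr0.
  by move=> a Aa; rewrite -!mulrA (mulrA x) xau // mulr0.
apply: (hsemi (fun x => L x /\ M x)); last first.
- split; first by split.
  split=> //; move=> x [Ax [xu xau]]; split=> //.
- by move=> x y [Lx _] [_ [_ My]]; case: (My x Lx).
- split.
  + by move=> x [[]].
  + rewrite /L /M; split; [split; [done | split; [by rewrite mul0r | by move=> *; rewrite !mul0r]]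
            | split; [done | by move=> x _; split; [rewrite mulr0 | move=> *; rewrite mulr0]]].
  + move=> x y [[Ax [xu xau]] [_ Mx]] [[Ay [yu yau]] [_ My]].
    rewrite /L /M; split; [split; [|split]|split]; first exact: AB.
    * by rewrite mulrBl xu yu subr0.
    * by move=> a Aa; rewrite mulrBl mulrBl xau // yau // subr0.
    * exact: AB.
    * move=> z Lz; case: (Mx z Lz) => [zx zax]; case: (My z Lz) => [zy zay].
      by split; [rewrite mulrBr zx zy subr0 | move=> a Aa; rewrite mulrBr zax // zay // subr0].
  + move=> c x [[Ax [xu xau]] [_ Mx]].
    rewrite /L /M; split; [split; [|split]|split]; first exact: AZ.
    * by rewrite -scalerAl xu scaler0.
    * by move=> a Aa; rewrite -!scalerAl xau // scaler0.
    * exact: AZ.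
    * move=> z Lz; case: (Mx z Lz) => [zx zax].
      by split; [rewrite -scalerAr zx scaler0 | move=> a Aa; rewrite -scalerAr zax // scaler0].
  + move=> b x Ab [Lx [Ax Mx]] /=; split; split.
    * exact: LmulL.
    * rewrite /M; split; first exact: AM.
      move=> z Lz; split; first by rewrite mulrA; case: (Mx (z * b) (LmulR _ _ Lz Ab)).
      by move=> a Aa; rewrite mulrA -(mulrA z); case: (Mx z Lz) => _ H; apply: H; apply: AM.
    * exact: LmulR.
    * rewrite /M; split; first exact: AM.
      move=> z Lz; case: (Mx z Lz) => zx zax.
      by split; [rewrite mulrA zx mul0r | move=> a Aa; rewrite mulrA zax // mul0r].
Qed.
Lemma comm_mulr (Phi : comPzRingType) (S : algType Phi) (x y w : S) :
  commutator x (y * w) = commutator x y * w + y * commutator x w.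
Proof. by rewrite /commutator mulrBl mulrBr !mulrA addrA subrK. Qed.

Lemma comm_expand (Phi : comPzRingType) (S : algType Phi) (x z q z' : S) :
  commutator x (z * q * z') =
  commutator x z * q * z' - z * (q * x - x * q) * z' + z * q * commutator x z'.
Proof.
rewrite /commutator !mulrBl !mulrBr !mulrA mulrBl ?mulrA opprB !addrA subrK subrK //.
Qed.

Theorem mainTheorem5 (Phi : comPzRingType) (S : algType Phi)
  (A Q : S -> Prop)
  (hA : is_subalgebra A)
  (hsemi : semiprime A)
  (h2 : two_torsion_free A)
  (hS : symmetric_quotient_algebra A)
  (hQ : is_subalgebra Q)
  (hAQ : forall x, A x -> Q x)
  (q : S) (hq : Q q)
  (I : S -> Prop) (hI : essential_ideal A I)
  (hqI : forall x, I x -> A (q * x) /\ A (x * q))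
  (hcomm : forall x y, I x -> I y -> commutator q (commutator x y) = 0) :
  forall x, I x -> commutator q x = 0.
Proof.
move=> x Ix.
have hI' := hI; case: hI' => [[IA I0 IB IZ IM] _].
have hA' := hA; case: hA' => [A0 AB AM AZ].
case: hS => [_ hS2 hS3].
have qC : forall a b, I a -> I b -> q * commutator a b = commutator a b * q.
  by move=> a b Ia Ib; apply/eqP; rewrite -subr_eq0; apply/eqP; exact: hcomm.
have Imul : forall a b, I a -> I b -> I (a * b).
  by move=> a b Ia Ib; case: (IM a b (IA a Ia) Ib).
set v := q * x - x * q.
have Av : A v by case: (hqI x Ix) => h1 h3; exact: AB.
have step1 : forall c, I c -> v * commutator x c = 0.
  move=> c Ic.
  have h := hcomm x (x * c) Ix (Imul _ _ Ix Ic).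
  have e1 : commutator x (x * c) = x * commutator x c.
    by rewrite /commutator mulrBr !mulrA.
  move: h; rewrite /commutator in e1 *; rewrite e1.
  rewrite -(mulrA x _ q).
  have := qC x c Ix Ic; rewrite /commutator => <-.
  by rewrite /v mulrBl !mulrA.
have step2 : forall y w, I y -> I w -> v * y * commutator x w = 0.
  move=> y w Iy Iw.
  have := step1 _ (Imul _ _ Iy Iw).
  by rewrite comm_mulr mulrDr mulrA step1 // mul0r add0r mulrA.
have step3 : forall y z z', I y -> I z -> I z' -> v * y * z * v * z' = 0.
  move=> y z z' Iy Iz Iz'.
  have Izq : I (z * q * z').
    by case: (IM (z * q) z' (proj2 (hqI z Iz)) Iz').
  have := step2 y _ Iy Izq.
  rewrite comm_expand mulrDr mulrBr.
  have -> : v * y * (commutator x z * q * z') = v * y * commutator x z * q * z'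
    by rewrite !mulrA.
  rewrite step2 // !mul0r sub0r.
  have -> : v * y * (z * q * commutator x z') = v * (y * z) * commutator x z' * q.
    by rewrite -(mulrA z q) qC // !mulrA.
  rewrite step2 //; last exact: Imul.
  rewrite mul0r addr0 => /eqP; rewrite oppr_eq0 => /eqP <-.
  by rewrite /v !mulrA.
have step4 : forall y z z', I y -> I z -> I z' -> y * z * v * z' = 0.
  move=> y z z' Iy Iz Iz'.
  apply: (@semiprime_elt _ _ A hA hsemi).
  - exact: (AM _ _ (AM _ _ (AM _ _ (IA _ Iy) (IA _ Iz)) Av) (IA _ Iz')).
  - move=> a Aa.
    have Izay : I (z' * a * y).
      by case: (IM a z' Aa Iz') => _ h; apply: Imul.
    have -> : y * z * v * z' * a * (y * z * v * z') =
              y * z * (v * (z' * a * y) * z * v * z') by rewrite !mulrA.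
    by rewrite step3 // mulr0.
  - have -> : y * z * v * z' * (y * z * v * z') =
              y * z * (v * (z' * y) * z * v * z') by rewrite !mulrA.
    by rewrite step3 ?mulr0 //; apply: Imul.
have : v = 0.
  apply: (hS3 _ I hI) => z Iz.
  apply: (hS3 _ I hI) => y Iy.
  apply: (hS2 _ I hI) => z' Iz'.
  by rewrite !mulrA step4.
by rewrite /commutator.
Qed.
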